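(* In the setting described in the context, let $G=\{g_k\}$ be smooth encoders and $\Phi=\{\phi^{(i,k)}\}$ invariant block selectors satisfying the invariance constraint $\iota_i(\phi^{(i,k)}\oslash g_k(\mathbf{x}^k))=\iota_i(\phi^{(i,k')}\oslash g_{k'}(\mathbf{x}^{k'}))$ almost surely for all $i$ and all $k,k'\in V_i$. Then for every $i$ and $k\in V_i$, the map $h_k:=\phi^{(i,k)}\oslash (g_k\circ f_k):\mathbb{R}^N\to\mathbb{R}^{|A_i|}$ does not depend on any coordinate $z_q$ with $q\in[N]\setminus A_i$; i.e. $\phi^{(i,k)}\oslash g_k(\mathbf{x}^k)$ is a function of $\mathbf{z}^k_{A_i}$ only.
   Context: Notation: $[N]=\{1,\dots,N\}$; $\mathbf{z}_A=(\mathbf{z}_j)_{j\in A}$. Latents $\mathbf{z}^1,\dots,\mathbf{z}^K\in\mathbb{R}^N$; $\mathbf{x}^k=f_k(\mathbf{z}^k)\in\mathbb{R}^D$, each $f_k$ a $C^\infty$ diffeomorphism onto its image. Invariance property: for $A\subseteq[N]$ and an equivalence relation $\sim_\iota$ on $\mathbb{R}^{|A|}$, $\iota$ is the quotient projection. Latents $\mathbf{z},\tilde{\mathbf{z}}$ are non-trivially invariant on $A$ under $\iota$ if (i) $\iota(\mathbf{z}_A)=\iota(\tilde{\mathbf{z}}_A)$ and (ii) for any smooth $h_1,h_2:\mathbb{R}^N\to\mathbb{R}^{|A|}$, if some partial derivative $\partial h_1/\partial z_q$ (or $\partial h_2/\partial z_q$) with $q\notin A$ exists and is nonzero at some point, then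 $\iota(h_1(\mathbf{z}))\ne\iota(h_2(\tilde{\mathbf{z}}))$. Standing assumption: finite set $\mathfrak{I}=\{\iota_i\}$ with subsets $A_i$ and known $V_i\subseteq[K]$, $|V_i|\ge 2$, such that the $\mathbf{z}^k$, $k\in V_i$, are pairwise non-trivially invariant on $A_i$ under $\iota_i$. Encoders: smooth $g_k$ on the support of $\mathbf{x}^k$. Selection $a\oslash b=(b_j:a_j=1)$; selectors $\phi^{(i,k)}\in\{0,1\}^N$ with $\|\phi^{(i,k)}\|_0=|A_i|$. *)

(* Defs.v *)
From HB Require Import structures.
From mathcomp Require Import all_boot all_order all_algebra.
From mathcomp Require Import all_classical all_reals all_analysis.
Set Implicit Arguments. Unset Strict Implicit. Unset Printing Implicit Defensive.
Import Order.TTheory GRing.Theory Num.Theory.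
Import numFieldNormedType.Exports.
Local Open Scope ring_scope.
Local Open Scope classical_set_scope.

Section Defs.
Variable R : realType.

Definition basis_vec (n : nat) (j : 'I_n) : 'rV[R]_n := delta_mx ord0 j.

Fixpoint Ck (n m : nat) (k : nat) (f : 'rV[R]_n -> 'rV[R]_m) : Prop :=
  match k with
  | 0 => continuous f
  | k'.+1 => continuous f /\
      forall j : 'I_n, (forall x, derivable f x (basis_vec j)) /\
                       Ck k' ('D_(basis_vec j) f)
  end.

Definition smooth (n m : nat) (f : 'rV[R]_n -> 'rV[R]_m) : Prop :=
  forall k, Ck k f.

(** C^infinity diffeomorphism onto its image (= smooth embedding):
    smooth, injective immersion, and homeomorphism onto its image. *)
Definition diffeo_onto_image (n m : nat) (f : 'rV[R]_n -> 'rV[R]_m) : Prop :=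
  [/\ smooth f, injective f,
      (forall z (v : 'rV[R]_n), v != 0 -> 'D_v f z != 0) &
      (forall z (e : R), 0 < e -> exists2 d : R, 0 < d &
          forall z', `|f z' - f z| < d -> `|z' - z| < e)].

(** Selection: the entries of v at the indices in S, in increasing order,
    as a vector of length m (intended m = #|S|).  With S = A this is z_A;
    with S the support of a selector phi this is phi ⊘ v. *)
Definition select (n m : nat) (S : {set 'I_n}) (v : 'rV[R]_n) : 'rV[R]_m :=
  \row_(j < m) nth 0 [seq v ord0 i | i <- enum S] j.

Definition depends_outside (n m : nat) (A : {set 'I_n})
    (h : 'rV[R]_n -> 'rV[R]_m) : Prop :=
  exists q : 'I_n, q \notin A /\
    exists p, derivable h p (basis_vec q) /\ 'D_(basis_vec q) h p != 0.

Definition nontrivially_invariant (d : measure_display) (T : measurableType d)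
    (P : probability T R) (n : nat) (A : {set 'I_n}) (Q : Type)
    (iota : 'rV[R]_#|A| -> Q) (z zt : T -> 'rV[R]_n) : Prop :=
  {ae P, forall w, iota (select #|A| A (z w)) = iota (select #|A| A (zt w))} /\
  forall h1 h2 : 'rV[R]_n -> 'rV[R]_#|A|,
    smooth h1 -> smooth h2 ->
    depends_outside A h1 \/ depends_outside A h2 ->
    ~ {ae P, forall w, iota (h1 (z w)) = iota (h2 (zt w))}.

End Defs.

(* Main.v *)
Require Import Defs.
From HB Require Import structures.
From mathcomp Require Import all_boot all_order all_algebra.
From mathcomp Require Import all_classical all_reals all_analysis.
Import Order.TTheory GRing.Theory Num.Theory.
Import numFieldNormedType.Exports.
Local Open Scope ring_scope.
Local Open Scope classical_set_scope.

Section L1.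
Set Implicit Arguments. Unset Strict Implicit. Unset Printing Implicit Defensive.
Context {R : realType}.

Lemma derivable_coord n m p (G : 'rV[R]_n -> 'M[R]_(m,p)) x v i j :
  derivable G x v -> derivable (fun t => G t i j) x v /\
  'D_v (fun t => G t i j) x = 'D_v G x i j.
Proof.
move=> dG; split; first by move/derivable_mxP: dG; apply.
by rewrite (derive_mx dG) mxE.
Qed.

Lemma Ck_S n m k (f : 'rV[R]_n -> 'rV[R]_m) : Ck k.+1 f -> Ck k f.
Proof.
elim: k n m f => [|k IH] n m f /=; first by case.
move=> [cf H]; split=> // j; have [d Hc] := H j; split=> //; exact: IH.
Qed.

Lemma Ck_cont n m k (f : 'rV[R]_n -> 'rV[R]_m) : Ck k f -> continuous f.
Proof. by case: k => [|k] /= //; case. Qed.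

Lemma Ck_cst n m k (c : 'rV[R]_m) : Ck k (fun _ : 'rV[R]_n => c).
Proof.
elim: k n m c => [|k IH] n m c /=; first exact: cst_continuous.
split; first exact: cst_continuous.
move=> j; split; first by move=> x; exact: derivable_cst.
have -> : 'D_(basis_vec R j) (fun _ : 'rV[R]_n => c) = fun _ => 0.
  by apply/funext => x; exact: (derive_cst c).
exact: IH.
Qed.

Lemma Ck_add n m k (f g : 'rV[R]_n -> 'rV[R]_m) :
  Ck k f -> Ck k g -> Ck k (fun x => f x + g x).
Proof.
elim: k f g => [|k IH] f g /=; first by move=> cf cg x; exact: (continuousD (cf x) (cg x)).
move=> [cf Hf] [cg Hg]; split; first by move=> x; exact: (continuousD (cf x) (cg x)).
move=> j; have [df Cf] := Hf j; have [dg Cg] := Hg j; split.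
  by move=> x; apply: (derivableD (df x) (dg x)).
have -> : 'D_(basis_vec R j) (fun x => f x + g x) =
   fun x => 'D_(basis_vec R j) f x + 'D_(basis_vec R j) g x.
  by apply/funext => x; exact: (deriveD (df x) (dg x)).
exact: IH.
Qed.

Lemma Ck_sum n m k p (F : 'I_p -> 'rV[R]_n -> 'rV[R]_m) :
  (forall l, Ck k (F l)) -> Ck k (fun x => \sum_(l < p) F l x).
Proof.
move=> H; rewrite -fct_sumE.
apply: (big_ind (fun h : 'rV[R]_n -> 'rV[R]_m => Ck k h)).
- have -> : (0 : (_ -> _)) = (fun _ : 'rV[R]_n => (0 : 'rV[R]_m)) by []. exact: Ck_cst.
- by move=> f g; apply: Ck_add.
- by move=> l _; apply: H.
Qed.

Lemma Ck_id n k : Ck k (fun x : 'rV[R]_n => x).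
Proof.
case: k => [|k] /=; first by move=> x; exact: cvg_id.
split; first by move=> x; exact: cvg_id.
move=> j; split; first by move=> x; exact: derivable_id.
have -> : 'D_(basis_vec R j) (fun x : 'rV[R]_n => x) = fun _ => basis_vec R j.
  by apply/funext => x; exact: derive_id.
exact: Ck_cst.
Qed.

Lemma coord_cont n p (a : 'rV[R]_n -> 'rV[R]_p) c :
  continuous a -> continuous (fun x => a x 0 c).
Proof.
move=> ca x; exact: (@continuous_comp _ _ _ a (fun M : 'rV[R]_p => M 0 c) x (ca x) (@coord_continuous R 1 p 0 c (a x))).
Qed.

Lemma derive_scal n m p (a : 'rV[R]_n -> 'rV[R]_p) (b : 'rV[R]_n -> 'rV[R]_m) c x v :
  derivable a x v -> derivable b x v ->
  derivable (fun t => a t 0 c *: b t) x v /\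
  'D_v (fun t => a t 0 c *: b t) x = 'D_v a x 0 c *: b x + a x 0 c *: 'D_v b x.
Proof.
move=> da db.
have hij i j : derivable (fun t => (a t 0 c *: b t) i j) x v /\
   'D_v (fun t => (a t 0 c *: b t) i j) x =
   ('D_v a x 0 c *: b x + a x 0 c *: 'D_v b x) i j.
  have -> : (fun t => (a t 0 c *: b t) i j) =
     (fun t => a t 0 c) * (fun t => b t i j).
    by apply/funext => t; rewrite mxE.
  have [da1 Da1] := derivable_coord 0 c da.
  have [db1 Db1] := derivable_coord i j db.
  split; first exact: derivableM.
  rewrite deriveM // Da1 Db1 !mxE /=.
  rewrite addrC; congr (_ + _); exact: mulrC.
have dd : derivable (fun t => a t 0 c *: b t) x v.
  by apply/derivable_mxP => i j; case: (hij i j).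
split=> //.
rewrite (derive_mx dd); apply/matrixP => i j; rewrite mxE.
by case: (hij i j).
Qed.

Lemma Ck_scal n m p k (a : 'rV[R]_n -> 'rV[R]_p) (b : 'rV[R]_n -> 'rV[R]_m) c :
  Ck k a -> Ck k b -> Ck k (fun t => a t 0 c *: b t).
Proof.
have cont (a' : 'rV[R]_n -> 'rV[R]_p) (b' : 'rV[R]_n -> 'rV[R]_m) :
    continuous a' -> continuous b' -> continuous (fun t => a' t 0 c *: b' t).
  by move=> ca cb x; apply: continuousZ; [exact: coord_cont|exact: cb].
elim: k a b => [|k IH] a b; first exact: cont.
move=> Ha Hb; have Ha' := Ck_S Ha; have Hb' := Ck_S Hb.
move: Ha Hb => [ca Ha] [cb Hb]; split; first exact: cont.
move=> j; have [da Ca] := Ha j; have [db Cb] := Hb j; split.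
  by move=> x; case: (derive_scal c (da x) (db x)).
have -> : 'D_(basis_vec R j) (fun t => a t 0 c *: b t) = fun x =>
   'D_(basis_vec R j) a x 0 c *: b x + a x 0 c *: 'D_(basis_vec R j) b x.
  by apply/funext => x; case: (derive_scal c (da x) (db x)).
by apply: Ck_add; apply: IH.
Qed.

Lemma Ck_mulmx n m k (J : 'M[R]_(n, m)) : Ck k (fun h : 'rV[R]_n => h *m J).
Proof.
have -> : (fun h : 'rV[R]_n => h *m J) =
    fun h => \sum_(i < n) (fun h : 'rV[R]_n => h) h 0 i *: (fun _ : 'rV[R]_n => row i J) h.
  by apply: funext => h; rewrite mulmx_sum_row.
apply: Ck_sum => i; apply: Ck_scal; [exact: Ck_id | exact: Ck_cst].
Qed.

End L1.


Section L2.
Set Implicit Arguments. Unset Strict Implicit. Unset Printing Implicit Defensive.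
Context {R : realType}.

Lemma entry_le n (v : 'rV[R]_n) c : `|v 0 c| <= `|v|.
Proof.
rewrite [leRHS]/Num.Def.normr/= mx_normrE.
by apply: le_trans; last exact: (le_bigmax _ _ (0, c)).
Qed.

Lemma norm_le n (v : 'rV[R]_n) r : 0 <= r -> (forall c, `|v 0 c| <= r) -> `|v| <= r.
Proof.
move=> r0 H; rewrite [leLHS]/Num.Def.normr/= mx_normrE (bigmax_le _ r0)//= => -[i j] _.
by rewrite (ord1 i); exact: H.
Qed.

Lemma line_der n m (G : 'rV[R]_n -> 'rV[R]_m) y e (s : R) :
  derivable G (y + s *: e) e ->
  derivable (fun t : R => G (y + t *: e)) s 1 /\
  'D_1 (fun t : R => G (y + t *: e)) s = 'D_e G (y + s *: e).
Proof.
have E : (fun h : R => h^-1 *: (((fun t : R => G (y + t *: e)) \o shift s) (h *: 1)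
            - G (y + s *: e))) =
         (fun h : R => h^-1 *: ((G \o shift (y + s *: e)) (h *: e) - G (y + s *: e))).
  apply: funext => h /=.
  by rewrite -[h%:A]/(h * 1) mulr1 scalerDl addrCA.
by rewrite /derivable /derive E.
Qed.

Lemma mvi (psi : R -> R) (k d t : R) :
  (forall s, derivable psi s 1) ->
  (forall s, `|s| <= `|t| -> `|'D_1 psi s - k| <= d) ->
  `|psi t - psi 0 - t * k| <= d * `|t|.
Proof.
move=> dpsi H.
have cpsi : continuous psi.
  move=> s; apply: differentiable_continuous.
  by apply/derivable1_diffP.
have isd s : is_derive s (1:R) psi ('D_1 psi s) by apply: derivableP.
have [t0|t0] := leP 0 t.
  have [c /andP[c0 ct] ->] := @MVT_segment R psi ('D_1 psi) 0 t t0
    (fun s _ => isd s) (continuous_subspaceT cpsi).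
  rewrite subr0 [t * k]mulrC -mulrBl normrM ler_wpM2r //.
  apply: H; rewrite !ger0_norm //; exact: le_trans ct.
have [c /andP[tc c0] E] := @MVT_segment R psi ('D_1 psi) t 0 (ltW t0)
  (fun s _ => isd s) (continuous_subspaceT cpsi).
have -> : psi t - psi 0 = 'D_1 psi c * t by rewrite -opprB E sub0r mulrN opprK.
rewrite [t * k]mulrC -mulrBl normrM ler_wpM2r //.
apply: H; rewrite !ler0_norm ?lerN2 //; exact: ltW.
Qed.

Lemma derivable_coordV (V : normedModType R) m p (G : V -> 'M[R]_(m,p)) x v i j :
  derivable G x v -> derivable (fun t => G t i j) x v /\
  'D_v (fun t => G t i j) x = 'D_v G x i j.
Proof.
move=> dG; split; first by move/derivable_mxP: dG; apply.
by rewrite (derive_mx dG) mxE.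
Qed.

Lemma step n m (F : 'rV[R]_n -> 'rV[R]_m) (q : 'I_n) y (t : R) x0 (eps : R) :
  (forall z, derivable F z (basis_vec R q)) ->
  (forall s : R, `|s| <= `|t| ->
     `|'D_(basis_vec R q) F (y + s *: basis_vec R q) - 'D_(basis_vec R q) F x0| <= eps) ->
  `|F (y + t *: basis_vec R q) - F y - t *: 'D_(basis_vec R q) F x0| <= eps * `|t|.
Proof.
set e := basis_vec R q => dF H.
have eps0 : 0 <= eps.
  by apply: le_trans (H 0 _); rewrite ?normr0.
apply: norm_le; first by rewrite mulr_ge0.
move=> c; set psi := fun s : R => F (y + s *: e) 0 c.
have dl s := line_der (dF (y + s *: e)).
have := @mvi psi ('D_e F x0 0 c) eps t.
have -> : psi 0 = F y 0 c by rewrite /psi scale0r addr0.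
rewrite !mxE; apply.
  move=> s; have [d1 _] := dl s.
  by have [] := derivable_coordV 0 c d1.
move=> s st; have [d1 D1] := dl s.
have [_ ->] := derivable_coordV 0 c d1.
rewrite D1; apply: le_trans (H s st).
by apply: le_trans (entry_le _ c); rewrite !mxE.
Qed.

End L2.


Section L3.
Set Implicit Arguments. Unset Strict Implicit. Unset Printing Implicit Defensive.
Context {R : realType}.

Definition trunc n (l : nat) (h : 'rV[R]_n) : 'rV[R]_n :=
  \row_j (if (j < l)%N then h 0 j else 0).

Lemma zmod_rearr (V : zmodType) (a b c d y : V) :
  a - b - (c + d) = (a - y - d) + (y - b - c).
Proof.
rewrite opprD !addrA [a - y - d + y]addrAC subrK.
by rewrite [a - d - b]addrAC [a - b - d - c]addrAC.
Qed.

Lemma core n m (F : 'rV[R]_n -> 'rV[R]_m) x (J : 'M[R]_(n, m)) (h : 'rV[R]_n)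
    (delta eps : R) :
  (forall j z, derivable F z (basis_vec R j)) ->
  (forall j, row j J = 'D_(basis_vec R j) F x) ->
  (forall y, `|y - x| < delta -> forall j,
      `|'D_(basis_vec R j) F y - 'D_(basis_vec R j) F x| <= eps) ->
  `|h| < delta ->
  forall l, (l <= n)%N ->
    `|F (x + trunc l h) - F x - trunc l h *m J| <= l%:R * eps * `|h|.
Proof.
move=> dF rJ Hb hd; elim=> [_|l IH ln].
  have -> : trunc 0 h = 0 by apply/rowP => j; rewrite !mxE.
  by rewrite addr0 subrr mul0mx subr0 normr0 mul0r mul0r.
set q : 'I_n := Ordinal ln.
set e := basis_vec R q.
set t := h 0 q.
have eps0 : 0 <= eps.
  apply: le_trans (Hb x _ q); first by [].
  by rewrite subrr normr0; apply: le_lt_trans hd.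
have Ht : trunc l.+1 h = trunc l h + t *: e.
  apply/rowP => j; rewrite !mxE eqxx /=.
  have jq : (j == q) = (nat_of_ord j == l) by [].
  rewrite jq ltnS; case: (ltngtP j l) => [jl|lj|jl].
  - by rewrite mulr0 addr0.
  - by rewrite mulr0 addr0.
  - rewrite mulr1 add0r /t; congr (h 0 _); exact: val_inj.
set y := x + trunc l h.
have -> : x + trunc l.+1 h = y + t *: e by rewrite Ht addrA.
have -> : trunc l.+1 h *m J = trunc l h *m J + t *: 'D_e F x.
  by rewrite Ht mulmxDl -scalemxAl -rowE rJ.
rewrite (zmod_rearr _ _ _ _ (F y)).
apply: le_trans (ler_normD _ _) _.
rewrite mulrSr mulrDl mul1r mulrDl addrC; apply: lerD.
  exact: IH (ltnW ln).
apply: le_trans (@step _ _ _ F q y t x eps (dF q) _) _; last first.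
  by rewrite ler_wpM2l // entry_le.
move=> s st; apply: Hb.
have -> : y + s *: e - x = trunc l h + s *: e by rewrite /y addrAC [x + _]addrC addrK.
apply: le_lt_trans hd; apply: norm_le => // j.
rewrite !mxE eqxx /=.
have jq : (j == q) = (nat_of_ord j == l) by [].
rewrite jq; case: (ltngtP j l) => [jl|lj|jl].
- by rewrite mulr0 addr0 entry_le.
- by rewrite mulr0 addr0 normr0.
- rewrite mulr1 add0r; apply: le_trans st _; exact: entry_le.
Qed.

Lemma diff_intro (V W : normedModType R) (f : V -> W) (df : {linear V -> W}) x :
  continuous df -> f \o shift x = cst (f x) + df +o_0 id -> differentiable f x.
Proof.
move=> dfc H; have E := diff_unique dfc H.
apply/diff_locallyP; rewrite E; split => //.
Qed.

Lemma trunc_full n (h : 'rV[R]_n) : trunc n h = h.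
Proof. by apply/rowP => j; rewrite !mxE ltn_ord. Qed.

Lemma C1_diff n m (F : 'rV[R]_n -> 'rV[R]_m) :
  (forall j z, derivable F z (basis_vec R j)) ->
  (forall j, continuous ('D_(basis_vec R j) F)) ->
  forall x, differentiable F x.
Proof.
move=> dF cD x.
pose J := \matrix_(j < n, c < m) 'D_(basis_vec R j) F x 0 c.
have rJ j : row j J = 'D_(basis_vec R j) F x by apply/rowP => c; rewrite !mxE.
apply: (@diff_intro _ _ F (mulmxr J) x).
  exact: (Ck_cont (Ck_mulmx 0 J)).
apply/eqaddoP => eps eps0.
pose eps' := eps / n.+1%:R.
have eps'0 : 0 < eps' by rewrite divr_gt0 // ltr0n.
have near1 : \forall y \near x, forall j,
    `|'D_(basis_vec R j) F x - 'D_(basis_vec R j) F y| <= eps'.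
  apply: (@filter_forall _ _ (fun j y => `|'D_(basis_vec R j) F x - 'D_(basis_vec R j) F y| <= eps') (nbhs x) _) => j.
  by move: (cD j x) => /cvgrPdist_le /(_ eps' eps'0).
move/nbhs_ballP: near1 => [delta d0 Hd].
apply/nbhs_ballP; exists delta => // h hb.
have hd : `|h| < delta by move: hb; rewrite -ball_normE /ball_ /= sub0r normrN.
have Hb : forall y, `|y - x| < delta -> forall j,
    `|'D_(basis_vec R j) F y - 'D_(basis_vec R j) F x| <= eps'.
  move=> y yx j; rewrite distrC; apply: (Hd y).
  by rewrite -ball_normE /ball_ /= distrC.
have := core dF rJ Hb hd (leqnn n); rewrite trunc_full => H.
have -> : (F \o shift x - (cst (F x) + mulmxr J)) h = F (x + h) - F x - h *m J.
  by rewrite -[LHS]/(F (h + x) - (F x + h *m J)) [h + x]addrC opprD addrA.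
apply: le_trans H _; rewrite ler_wpM2r // /eps' mulrA ler_pdivrMr ?ltr0n //.
by rewrite mulrC; apply: ler_wpM2l; [exact: ltW | rewrite ler_nat].
Qed.

End L3.


Section L4.
Set Implicit Arguments. Unset Strict Implicit. Unset Printing Implicit Defensive.
Context {R : realType}.

Lemma Ck_1 n m k (f : 'rV[R]_n -> 'rV[R]_m) : Ck k.+1 f -> Ck 1 f.
Proof. elim: k => [//|k IH] H; apply: IH; exact: Ck_S. Qed.

Lemma C1_diff' n m (f : 'rV[R]_n -> 'rV[R]_m) : Ck 1 f -> forall x, differentiable f x.
Proof.
move=> [_ H]; apply: C1_diff => j; first by case: (H j).
by case: (H j).
Qed.

Lemma chain n m p (f : 'rV[R]_n -> 'rV[R]_m) (g : 'rV[R]_m -> 'rV[R]_p) x v :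
  Ck 1 f -> Ck 1 g ->
  derivable (fun x => g (f x)) x v /\
  'D_v (fun x => g (f x)) x =
    \sum_(l < m) 'D_v f x 0 l *: 'D_(basis_vec R l) g (f x).
Proof.
move=> Hf Hg.
have df := C1_diff' Hf x; have dg := C1_diff' Hg (f x).
have dgf := differentiable_comp df dg.
split; first exact: (diff_derivable (v:=v) dgf).
rewrite (deriveE v dgf) (diff_comp df dg) /= -(deriveE v df).
rewrite {1}(row_sum_delta ('D_v f x)) linear_sum; apply: eq_bigr => l _.
by rewrite linearZ /= -(deriveE _ dg).
Qed.

Lemma Ck_comp n m p k (f : 'rV[R]_n -> 'rV[R]_m) (g : 'rV[R]_m -> 'rV[R]_p) :
  Ck k f -> Ck k g -> Ck k (fun x => g (f x)).
Proof.
elim: k f g => [|k IH] f g.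
  by move=> cf cg x; apply: continuous_comp; [exact: cf | exact: cg].
move=> Hf Hg; have Hf1 := Ck_1 Hf; have Hg1 := Ck_1 Hg.
have Hf' := Ck_S Hf.
move: Hf Hg => [cf Hf] [cg Hg]; split.
  by move=> x; apply: continuous_comp; [exact: cf | exact: cg].
move=> j; split.
  by move=> x; case: (chain x (basis_vec R j) Hf1 Hg1).
have -> : 'D_(basis_vec R j) (fun x => g (f x)) = fun x =>
    \sum_(l < m) 'D_(basis_vec R j) f x 0 l *: (fun y => 'D_(basis_vec R l) g (f y)) x.
  by apply: funext => x; case: (chain x (basis_vec R j) Hf1 Hg1).
apply: (Ck_sum (F := fun l x => 'D_(basis_vec R j) f x 0 l *: (fun y => 'D_(basis_vec R l) g (f y)) x)) => l.
apply: (Ck_scal (a := 'D_(basis_vec R j) f) (b := fun y => 'D_(basis_vec R l) g (f y)) l); first by case: (Hf j).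
by apply: (IH f ('D_(basis_vec R l) g)) => //; case: (Hg l).
Qed.

End L4.


Section L5.
Set Implicit Arguments. Unset Strict Implicit. Unset Printing Implicit Defensive.
Context {R : realType}.

Lemma select_mulmx n m (S : {set 'I_n}) :
  exists M : 'M[R]_(n, m), forall v, select m S v = v *m M.
Proof.
exists (\matrix_(i, j) (((j : nat) < size (enum S))%N && (nth i (enum S) j == i))%:R).
move=> v; apply/rowP => j; rewrite !mxE.
case: (ltnP j (size (enum S))) => js.
  case Es : (enum S) js => [//|a s'] js.
  rewrite (nth_map a); last by [].
  rewrite (bigD1 (nth a (a :: s') j)) //= !mxE js /=. rewrite [nth (nth _ _ _) _ _](set_nth_default a) // eqxx mulr1.
  rewrite big1 ?addr0 // => i ne; rewrite !mxE js /=.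
  rewrite (set_nth_default a) //.
  by rewrite eq_sym (negbTE ne) mulr0.
rewrite nth_default ?size_map //.
by rewrite big1 // => i _; rewrite !mxE ltnNge js /= mulr0.
Qed.

Lemma const_line n m (H : 'rV[R]_n -> 'rV[R]_m) (q : 'I_n) :
  (forall p, derivable H p (basis_vec R q) /\ 'D_(basis_vec R q) H p = 0) ->
  forall y (t : R), H (y + t *: basis_vec R q) = H y.
Proof.
move=> dH y t; apply/rowP => c.
set e := basis_vec R q.
set psi := fun s : R => H (y + s *: e) 0 c.
have dl s := line_der (proj1 (dH (y + s *: e))).
have Hm : `|psi t - psi 0 - t * 0| <= 0 * `|t|.
  apply: mvi.
    move=> s; have [d1 _] := dl s.
    by have [] := derivable_coordV 0 c d1.
  move=> s _; have [d1 D1] := dl s.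
  have [_ ->] := derivable_coordV 0 c d1.
  by rewrite D1 (proj2 (dH _)) mxE subr0 normr0.
move: Hm; have -> : psi 0 = H y 0 c by rewrite /psi scale0r addr0.
by rewrite mulr0 subr0 mul0r normr_le0 subr_eq0 => /eqP.
Qed.

Lemma const_outside n m (H : 'rV[R]_n -> 'rV[R]_m) (A : {set 'I_n}) :
  (forall q, q \notin A -> forall p,
     derivable H p (basis_vec R q) /\ 'D_(basis_vec R q) H p = 0) ->
  forall u u' : 'rV[R]_n, (forall j, j \in A -> u 0 j = u' 0 j) -> H u = H u'.
Proof.
move=> dH u u' Hu.
have [d Ed] : exists d, leq #|[set j | u 0 j != u' 0 j]%SET| d by exists #|[set j | u 0 j != u' 0 j]%SET|.
elim: d u Hu Ed => [|d IH] u Hu Ed.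
  have E0 : [set j | u 0 j != u' 0 j]%SET = finset.set0.
    by apply/eqP; rewrite -cards_eq0 -leqn0.
  suff -> : u = u' by [].
  apply/rowP => j; apply/eqP; apply: contraT => ne.
  have : j \in [set j | u 0 j != u' 0 j]%SET by rewrite inE.
  by rewrite E0 inE.
have [Ez|] := eqVneq #|[set j | u 0 j != u' 0 j]%SET| O.
  by apply: IH => //; rewrite Ez.
rewrite -lt0n => /card_gt0P [q qin].
have qA : q \notin A.
  apply/negP => qA; move: qin; rewrite inE (Hu q qA); by rewrite eqxx.
set w := u + (u' 0 q - u 0 q) *: basis_vec R q.
have wE j : w 0 j = if j == q then u' 0 q else u 0 j.
  rewrite !mxE eqxx /=; case: eqP => [->|_]; first by rewrite mulr1 addrC subrK.
  by rewrite mulr0 addr0.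
have Hw : H w = H u by apply: const_line; exact: dH.
rewrite -Hw; apply: IH.
  move=> j jA; rewrite wE; case: eqP => [jq|_]; last exact: Hu.
  by move: qA; rewrite -jq jA.
have pr : [set j | w 0 j != u' 0 j]%SET \proper [set j | u 0 j != u' 0 j]%SET.
  apply/properP; split.
    apply/fintype.subsetP => j; rewrite !inE wE; case: (eqVneq j q) => [->|ne] //; by rewrite eqxx.
  by exists q => //; rewrite inE wE eqxx eqxx.
by rewrite -ltnS; apply: leq_trans (proper_card pr) Ed.
Qed.

End L5.


Theorem mainTheorem3
  (R : realType) (d : measure_display) (T : measurableType d)
  (P : probability T R)
  (N D K M : nat)
  (z : 'I_K -> T -> 'rV[R]_N)
  (f : 'I_K -> 'rV[R]_N -> 'rV[R]_D)
  (A : 'I_M -> {set 'I_N})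
  (V : 'I_M -> {set 'I_K})
  (Q : 'I_M -> Type)
  (iota : forall i : 'I_M, 'rV[R]_#|A i| -> Q i)
  (g : 'I_K -> 'rV[R]_D -> 'rV[R]_N)
  (phi : 'I_M -> 'I_K -> {set 'I_N}) :
  (forall k, diffeo_onto_image (f k)) ->
  (forall i, 2 <= #|V i|)%N ->
  (forall i k k', k \in V i -> k' \in V i -> k != k' ->
     nontrivially_invariant P (iota i) (z k) (z k')) ->
  (forall k, smooth (g k)) ->
  (forall i k, k \in V i -> #|phi i k| = #|A i|) ->
  (forall i k k', k \in V i -> k' \in V i ->
     {ae P, forall w,
        iota i (select #|A i| (phi i k) (g k (f k (z k w)))) =
        iota i (select #|A i| (phi i k') (g k' (f k' (z k' w))))}) ->
  forall i k, k \in V i ->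
    forall u u' : 'rV[R]_N, (forall j, j \in A i -> u ord0 j = u' ord0 j) ->
      select #|A i| (phi i k) (g k (f k u)) =
      select #|A i| (phi i k) (g k (f k u')).
Proof.
move=> hf hV hinv hg hphi hcon i k kV u u' huu'.
have [k' k'V k'k] : exists2 k', k' \in V i & k' != k.
  have : (0 < #|V i :\ k|)%N.
    by move: (hV i); rewrite (cardsD1 k) kV add1n ltnS.
  move/card_gt0P => [k' ]; rewrite !inE => /andP[k'k k'V].
  by exists k'.
have kk' : k != k' by rewrite eq_sym.
have [_ Hn] := hinv i k k' kV k'V kk'.
pose H1 := fun v => select #|A i| (phi i k) (g k (f k v)).
pose H2 := fun v => select #|A i| (phi i k') (g k' (f k' v)).
have sm kk : smooth (fun v => select #|A i| (phi i kk) (g kk (f kk v))).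
  have [Mx HM] := @select_mulmx R N #|A i| (phi i kk).
  have -> : (fun v => select #|A i| (phi i kk) (g kk (f kk v))) =
     (fun v => (fun w => g kk (f kk w)) v *m Mx).
    by apply: funext => v; rewrite HM.
  move=> kd; apply: (Ck_comp (f := fun w => g kk (f kk w)) (g := fun w => w *m Mx)).
    apply: Ck_comp; last exact: hg.
    by case: (hf kk).
  exact: Ck_mulmx.
have ndep : ~ depends_outside (A i) H1.
  move=> dep; apply: (Hn H1 H2 (sm k) (sm k') (or_introl dep)).
  exact: (hcon i k k' kV k'V).
apply: (const_outside (H := H1) (A := A i)) => // q qA p.
have d1 : derivable H1 p (basis_vec R q).
  by have [_ Hd] := sm k 1%N; case: (Hd q).
split => //.
apply/eqP; apply: contraT => ne; exfalso; apply: ndep.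
by exists q; split => //; exists p; split.
Qed.
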